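(* Let $\vec{\alpha}=\langle\alpha_s:s\in[\mathbb{N}]^{<\infty}\rangle$ be a sequence of nonstandard hypernatural numbers. If $T$ and $S$ are $\vec{\alpha}$-trees, then $S\cap T$ is an $\vec{\alpha}$-tree if and only if either $st(T)\sqsubseteq st(S)\in T$ or $st(S)\sqsubseteq st(T)\in S$.
   Context: Setting (Alpha-Theory of Benci–Di Nasso): ZFC together with a new symbol $\alpha$ satisfying: ($\alpha$1) every sequence $\varphi=\langle\varphi_i:i\in\mathbb{N}\rangle$ has a unique ideal value $\varphi[\alpha]$; ($\alpha$2) if $\varphi[\alpha]=\psi[\alpha]$ and $f\circ\varphi$, $f\circ\psi$ make sense then $(f\circ\varphi)[\alpha]=(f\circ\psi)[\alpha]$; ($\alpha$3) constant real sequences $r$ have ideal value $r$, and $\langle i\rangle$ has ideal value $\alpha\notin\mathbb{N}$; ($\alpha$4) if $\vartheta_i=\{\varphi_i,\psi_i\}$ then $\vartheta[\alpha]=\{\varphi[\alpha],\psi[\alpha]\}$; ($\alpha$5) the constant sequence $\emptyset$ has ideal value $\emptyset$, and for nonempty $\psi_i$, $\psi[\alpha]=\{\vartheta[\alpha]:\vartheta_i\in\psi_i\ \forall i\}$. ${}^*A$ is the ideal value of the constant sequence $A$; elements of ${}^*\mathbb{N}\setminus\mathbb{N}$ are nonstandard hypernatural numbers. For finite $s,t\subseteq\mathbb{N}$, $s\sqsubseteq t$ means $s=\{j\in t:j\le i\}$ for some $i$. A tree on $\mathbb{N}$ is a nonempty $T\subseteq[\mathbb{N}]^{<\infty}$ closed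 under $\sqsubseteq$-initial segments; stem $st(T)$ = $\sqsubseteq$-maximal $s\in T$ comparable with all elements of $T$ (if it exists); $T/s=\{t\in T:s\sqsubseteq t\}$. An $\vec{\alpha}$-tree is a tree $T$ with a stem, $T/st(T)\neq\emptyset$, and $s\cup\{\alpha_s\}\in{}^*T$ for all $s\in T/st(T)$. *)

(* Defs.v *)
From mathcomp Require Import all_boot finmap.
Set Implicit Arguments. Unset Strict Implicit. Unset Printing Implicit Defensive.
Local Open Scope fset_scope.

Definition finset_nat := {fset nat}.

Definition fsfamily := finset_nat -> Prop.

(* s ⊑ t : s is an initial segment of t, i.e. s = {j in t | j < i} for some i.
   (We use "< i" so that the empty set is an initial segment of every t.) *)
Definition initseg (s t : finset_nat) : Prop :=
  exists i : nat, s = [fset j in t | j < i].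

Definition comparable (s t : finset_nat) : Prop := initseg s t \/ initseg t s.

Definition is_tree (T : fsfamily) : Prop :=
  (exists t, T t) /\ (forall s t, T t -> initseg s t -> T s).

Definition is_stem (T : fsfamily) (s : finset_nat) : Prop :=
  T s /\ (forall t, T t -> comparable s t) /\
  (forall s', T s' -> (forall t, T t -> comparable s' t) -> initseg s s' -> s' = s).

Definition tree_above (T : fsfamily) (s : finset_nat) : fsfamily :=
  fun t => T t /\ initseg s t.

Definition fam_inter (S T : fsfamily) : fsfamily := fun t => S t /\ T t.

(* Semantics of Alpha-Theory: the ideal-value map is the ultrapower modulo the
   nonprincipal ultrafilter U = {A ⊆ N | alpha ∈ *A}. *)
Definition is_nonprincipal_ultrafilter (U : (nat -> Prop) -> Prop) : Prop :=
  U (fun _ => True) /\ ~ U (fun _ => False) /\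
  (forall A B : nat -> Prop, U A -> (forall i, A i -> B i) -> U B) /\
  (forall A B : nat -> Prop, U A -> U B -> U (fun i => A i /\ B i)) /\
  (forall A : nat -> Prop, U A \/ U (fun i => ~ A i)) /\
  (forall n : nat, ~ U (fun i => i = n)).

(* A hypernatural number is represented by a sequence x : nat -> nat (its ideal
   value x[alpha]); it is nonstandard iff it differs from each standard n. *)
Definition nonstandard (U : (nat -> Prop) -> Prop) (x : nat -> nat) : Prop :=
  forall n : nat, U (fun i => x i <> n).

(* s ∪ {x[alpha]} ∈ *T, for standard s and hypernatural x: the ideal value of the
   sequence i |-> s ∪ {x i} belongs to *T. *)
Definition in_star_ext (U : (nat -> Prop) -> Prop) (T : fsfamily)
    (s : finset_nat) (x : nat -> nat) : Prop :=
  U (fun i => T (s `|` [fset x i])).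

Definition is_alpha_tree (U : (nat -> Prop) -> Prop)
    (alphas : finset_nat -> nat -> nat) (T : fsfamily) : Prop :=
  is_tree T /\
  exists st, is_stem T st /\ (exists t, tree_above T st t) /\
    (forall s, tree_above T st s -> in_star_ext U T s (alphas s)).

(* Main.v *)
Require Import Defs.
From mathcomp Require Import all_boot finmap.
From Stdlib Require Import Classical FunctionalExtensionality PropExtensionality.
Set Implicit Arguments. Unset Strict Implicit. Unset Printing Implicit Defensive.
Local Open Scope fset_scope.

Lemma bound_seq (l : seq nat) : exists m, forall j, j \in l -> j <= m.
Proof.
elim: l => [|a l [m Hm]]; first by exists 0.
exists (maxn a m) => j; rewrite inE => /orP [/eqP ->|/Hm H].
  by rewrite leq_maxl.
by apply: leq_trans H (leq_maxr _ _).
Qed.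

Lemma bound_fs (s : finset_nat) : exists m, forall j, j \in s -> j <= m.
Proof. case: (bound_seq (enum_fset s)) => m Hm; exists m => j Hj; exact: Hm. Qed.

Lemma memF (t : finset_nat) i j : (j \in [fset j in t | j < i]) = (j \in t) && (j < i).
Proof. by rewrite !(in_fset, inE). Qed.

Lemma is_sub s t : initseg s t -> forall j, j \in s -> j \in t.
Proof. by case=> i -> j; rewrite memF => /andP []. Qed.

Lemma init_refl s : initseg s s.
Proof.
case: (bound_fs s) => m Hm; exists m.+1; apply/fsetP => j; rewrite memF.
case Hj: (j \in s) => //=; by rewrite ltnS Hm.
Qed.

Lemma init_trans s t u : initseg s t -> initseg t u -> initseg s u.
Proof.
case=> i -> [k ->]; exists (minn i k); apply/fsetP => j; rewrite !memF.
by rewrite leq_min; case: (j \in u); case: (j < i); case: (j < k).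
Qed.

Lemma init_antisym s t : initseg s t -> initseg t s -> s = t.
Proof.
move=> H1 H2; apply/fsetP => j; apply/idP/idP => Hj; [exact: (is_sub H1 Hj)|exact: (is_sub H2 Hj)].
Qed.

Lemma init_add s x : (forall j, j \in s -> j < x) -> initseg s (s `|` [fset x]).
Proof.
move=> Hb; exists x; apply/fsetP => j; rewrite memF !inE.
case Hj: (j \in s) => /=; first by rewrite Hb.
by case: eqP => //= ->; rewrite ltnn.
Qed.

Lemma init_drop a s x : initseg a (s `|` [fset x]) -> x \notin a -> initseg a s.
Proof.
case=> i Ha Hx; exists i; subst a; move: Hx; rewrite memF !inE eqxx orbT /= => Hx.
apply/fsetP => j; rewrite memF !inE.
case Hj: (j == x) => /=; last by rewrite orbF.
by move/eqP: Hj => ->; rewrite (negbTE Hx) !andbF.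
Qed.

Lemma init_common a b t : initseg a t -> initseg b t -> Defs.comparable a b.
Proof.
case=> i -> [k ->]; case: (leqP i k) => H; [left; exists i|right; exists k];
  apply/fsetP => j; rewrite !memF.
  case: (j \in t) => //=; case Hji: (j < i); rewrite ?andbF // andbT.
  by rewrite (leq_trans Hji H).
case: (j \in t) => //=; case Hji: (j < k); rewrite ?andbF // andbT.
by rewrite (ltn_trans Hji H).
Qed.

Section U.
Variable U : (nat -> Prop) -> Prop.
Hypothesis hU : is_nonprincipal_ultrafilter U.

Lemma U_mono (A B : nat -> Prop) : U A -> (forall i, A i -> B i) -> U B.
Proof. by case: hU => [_ [_ [H _]]]; apply: H. Qed.

Lemma U_and (A B : nat -> Prop) : U A -> U B -> U (fun i => A i /\ B i).
Proof. by case: hU => [_ [_ [_ [H _]]]]; apply: H. Qed.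

Lemma U_ex (A : nat -> Prop) : U A -> exists i, A i.
Proof.
move=> HA; apply: NNPP => Hn; case: hU => [_ [HF _]]; apply: HF.
apply: (U_mono HA) => i Hi; apply: Hn; by exists i.
Qed.

Lemma U_big x (s : finset_nat) : nonstandard U x -> U (fun i => forall j, j \in s -> j < x i).
Proof.
move=> Hx; case: (bound_fs s) => m Hm.
have H : U (fun i => forall k, k <= m -> x i <> k).
  elim: m {Hm} => [|m IH].
    apply: (U_mono (Hx 0)) => i Hi k; rewrite leqn0 => /eqP ->; exact: Hi.
  apply: (U_mono (U_and IH (Hx m.+1))) => i [H1 H2] k; rewrite leq_eqVlt.
  by case/orP => [/eqP ->|]; [|rewrite ltnS; apply: H1].
apply: (U_mono H) => i Hi j Hj; case: (leqP (x i) j) => // Hle.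
by exfalso; apply: (Hi (x i)) => //; apply: leq_trans Hle (Hm _ Hj).
Qed.
End U.

Lemma stem_uniq (T : fsfamily) a b : is_stem T a -> is_stem T b -> a = b.
Proof.
move=> [Ta [Ca Ma]] [Tb [Cb Mb]].
case: (Ca b Tb) => H; first by symmetry; apply: Ma.
by apply: Mb.
Qed.

Lemma key U (hU : is_nonprincipal_ultrafilter U) (X : fsfamily) st r b :
  nonstandard U b -> is_stem X st -> X r -> U (fun i => X (r `|` [fset b i])) ->
  initseg st r.
Proof.
move=> Hb [Xst [Cst _]] Xr HU.
case: (Cst r Xr) => // Hrs.
case: (U_ex hU (U_and hU (U_big hU st Hb) HU)) => i [Hbig Hx].
case: (Cst _ Hx) => H.
  apply: init_drop H _; apply/negP => /Hbig; by rewrite ltnn.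
have Hbi : b i \in r `|` [fset b i] by rewrite !inE eqxx orbT.
have := Hbig _ (is_sub H Hbi); by rewrite ltnn.
Qed.

Lemma dir U (hU : is_nonprincipal_ultrafilter U)
  (alphas : finset_nat -> nat -> nat)
  (halphas : forall s, nonstandard U (alphas s))
  (S T : fsfamily) (hS : is_alpha_tree U alphas S) (hT : is_alpha_tree U alphas T)
  (stS stT : finset_nat) (hstS : is_stem S stS) (hstT : is_stem T stT) :
  initseg stT stS -> T stS -> is_alpha_tree U alphas (fam_inter S T).
Proof.
move=> Hinit TstS.
case: hS => [[_ ClS] [st0 [Hst0 [_ AS]]]].
have E0 := stem_uniq Hst0 hstS; subst st0.
case: hT => [[_ ClT] [st1 [Hst1 [_ AT]]]].
have E1 := stem_uniq Hst1 hstT; subst st1.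
have AI : forall s, S s -> T s -> initseg stS s ->
    U (fun i => fam_inter S T (s `|` [fset alphas s i])).
  move=> s Ss Ts Hs.
  have H1 : tree_above S stS s by [].
  have H2 : tree_above T stT s by split => //; apply: init_trans Hinit Hs.
  by apply: (U_mono hU (U_and hU (AS _ H1) (AT _ H2))).
case: hstS => [SstS [CS _]].
split.
  split; first by exists stS.
  by move=> s t [St Tt] H; split; [apply: ClS St H|apply: ClT Tt H].
exists stS; split; last first.
  split; first by exists stS; split => //; apply: init_refl.
  by move=> s [[Ss Ts] Hs]; apply: AI.
split => //; split; first by move=> t [St _]; apply: CS.
move=> s' [Ss' Ts'] Cs' Hs'.
have HU := U_and hU (U_big hU s' (halphas stS)) (AI _ SstS TstS (init_refl _)).
case: (U_ex hU HU) => i [Hbig Hx].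
case: (Cs' _ Hx) => H.
  apply: init_antisym _ Hs'; apply: init_drop H _.
  apply/negP => /Hbig; by rewrite ltnn.
have Hbi : alphas stS i \in stS `|` [fset alphas stS i] by rewrite !inE eqxx orbT.
have := Hbig _ (is_sub H Hbi); by rewrite ltnn.
Qed.

Theorem mainTheorem16 (U : (nat -> Prop) -> Prop)
  (hU : is_nonprincipal_ultrafilter U)
  (alphas : finset_nat -> nat -> nat)
  (halphas : forall s, nonstandard U (alphas s))
  (S T : fsfamily) (hS : is_alpha_tree U alphas S) (hT : is_alpha_tree U alphas T)
  (stS stT : finset_nat) (hstS : is_stem S stS) (hstT : is_stem T stT) :
  is_alpha_tree U alphas (fam_inter S T) <->
  ((initseg stT stS /\ T stS) \/ (initseg stS stT /\ S stT)).
Proof.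
split.
  move=> [_ [r [[[Sr Tr] _] [_ hal]]]].
  have HU := hal r (conj (conj Sr Tr) (init_refl r)).
  have H1 : initseg stS r.
    apply: (key hU (halphas r) hstS Sr); apply: (U_mono hU HU); by move=> i [].
  have H2 : initseg stT r.
    apply: (key hU (halphas r) hstT Tr); apply: (U_mono hU HU); by move=> i [].
  case: hS => [[_ ClS] _]; case: hT => [[_ ClT] _].
  case: (init_common H1 H2) => H.
    by right; split => //; apply: ClS Sr H2.
  by left; split => //; apply: ClT Tr H1.
case=> [[H1 H2]|[H1 H2]]; first exact: (dir hU halphas hS hT hstS hstT H1 H2).
have -> : fam_inter S T = fam_inter T S.
  apply: functional_extensionality => t; apply: propositional_extensionality.
  by rewrite /fam_inter; split => [[]|[]].
exact: (dir hU halphas hT hS hstT hstS H1 H2).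
Qed.
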